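(* Let $\mathcal{D}=(D,<,\approx)$ with $D$ infinite, $<$ a strict total order, and $\mathcal{D}$ dense and open. Let $l,r\in\mathbb{N}$. Then for every $(l,r)$-symbolic model $\rho$, the local projection $\rho_l$ is realized by some local model; that is, there is an infinite sequence $\sigma_l$ of maps $V_{\mathrm{local}}\to D$ with $\rho(i)\cap\Omega^l=\{c\in\Omega^l:\sigma_l,i\models c\}$ for all $i\in\mathbb{N}$.
   Context: $\mathcal{D}$ is dense if for all $d<d''$ in $D$ there is $d'$ with $d<d'<d''$. It is open if every $d'\in D$ has some $d<d'<d''$ in $D$. $V=V_{\mathrm{local}}\uplus V_{\mathrm{remote}}$ is a disjoint union of finite variable sets. Constraint semantics: - $\sigma,n\models\mathbf{X}^ix\approx\mathbf{X}^jy$ iff $\sigma(n+i)(x)=\sigma(n+j)(y)$. - $\sigma,n\models\mathbf{X}^ix<\mathbf{X}^jy$ iff $\sigma(n+i)(x)<\sigma(n+j)(y)$. - $\sigma,n\models\mathbf{X}^i(x\approx\mathbf{XF}y)$ iff there is $k>n+i$ with $\sigma(n+i)(x)=\sigma(k)(y)$. $\Omega^l$ is the set of all $\mathbf{X}^ix\approx\mathbf{X}^jy$ and $\mathbf{X}^ix<\mathbf{X}^jy$ with $x,y\in V_{\mathrm{local}}$ and $i,j\in\{0,\dots,l\}$. $\Omega^r$ is the set of all $\mathbf{X}^ix\approx\mathbf{X}^jy$ and $\mathbf{X}^i(x\approx\mathbf{XF}y)$ with $x,y\in V_{\mathrm{remote}}$ and $i,j\in\{0,\dots,r\}$. An $l$-frame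 is a set $\{c\in\Omega^l:\sigma_l,0\models c\}$ for some infinite sequence $\sigma_l$ of maps $V_{\mathrm{local}}\to D$. An $r$-frame is a set $FR\subseteq\Omega^r$ satisfying the following conditions, for all remote variables and indices $\le r$. 1. $\mathbf{X}^ix\approx\mathbf{X}^ix\in FR$. 2. $\approx$-constraints in $FR$ are symmetric. 3. $\approx$-constraints in $FR$ are transitive. 4. Suppose $\mathbf{X}^ix\approx\mathbf{X}^jy\in FR$. - If $i=j$, then $\mathbf{X}^i(x\approx\mathbf{XF}z)\in FR$ iff $\mathbf{X}^j(y\approx\mathbf{XF}z)\in FR$. - If $i<j$, then $\mathbf{X}^i(x\approx\mathbf{XF}y)\in FR$. Moreover, $\mathbf{X}^i(x\approx\mathbf{XF}z)\in FR$ iff either $\mathbf{X}^j(y\approx\mathbf{XF}z)\in FR$ or $\mathbf{X}^ix\approx\mathbf{X}^{j'}z\in FR$ for some $i<j'\le j$. An $(l,r)$-frame is the union of an $l$-frame and an $r$-frame. A pair $(FR_1,FR_2)$ of $(l,r)$-frames is one-step consistent if, for all variables and all $0<i,j$ (within range): - $\mathbf{X}^ix\approx\mathbf{X}^jy\in FR_1$ iff $\mathbf{X}^{i-1}x\approx\mathbf{X}^{j-1}y\in FR_2$; - $\mathbf{X}^ix<\mathbf{X}^jy\in FR_1$ iff $\mathbf{X}^{i-1}x<\mathbf{X}^{j-1}y\in FR_2$; - $\mathbf{X}^i(x\approx\mathbf{XF}y)\in FR_1$ iff $\mathbf{X}^{i-1}(x\approx\mathbf{XF}y)\in FR_2$.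 An $(l,r)$-symbolic model is an infinite sequence of $(l,r)$-frames with each consecutive pair one-step consistent. Its local projection is $\rho_l(i)=\rho(i)\cap\Omega^l$. *)

(* Defs.v *)
From Stdlib Require Import List.
From mathcomp Require Import all_boot.

Set Implicit Arguments.
Unset Strict Implicit.
Unset Printing Implicit Defensive.

(** * Data domain (D, <, ≈): ≈ is interpreted as equality on D. *)
Definition strict_total_order (D : Type) (lt : D -> D -> Prop) : Prop :=
  (forall d, ~ lt d d) /\
  (forall d1 d2 d3, lt d1 d2 -> lt d2 d3 -> lt d1 d3) /\
  (forall d1 d2, lt d1 d2 \/ d1 = d2 \/ lt d2 d1).

Definition infinite_type (D : Type) : Prop :=
  forall s : list D, exists d, ~ List.In d s.

Definition dense (D : Type) (lt : D -> D -> Prop) : Prop :=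
  forall d d'', lt d d'' -> exists d', lt d d' /\ lt d' d''.

Definition open_dom (D : Type) (lt : D -> D -> Prop) : Prop :=
  forall d', exists d d'', lt d d' /\ lt d' d''.

(** * Constraints over a variable type V.
    Ceq i x j y  =  X^i x ≈ X^j y
    Clt i x j y  =  X^i x < X^j y
    Cfut i x y   =  X^i (x ≈ XF y)                                         *)
Inductive constraint (V : Type) : Type :=
| Ceq  : nat -> V -> nat -> V -> constraint V
| Clt  : nat -> V -> nat -> V -> constraint V
| Cfut : nat -> V -> V -> constraint V.

Arguments Ceq {V}. Arguments Clt {V}. Arguments Cfut {V}.

Definition cmap (V W : Type) (f : V -> W) (c : constraint V) : constraint W :=
  match c with
  | Ceq i x j y => Ceq i (f x) j (f y)
  | Clt i x j y => Clt i (f x) j (f y)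
  | Cfut i x y => Cfut i (f x) (f y)
  end.

Definition sat (D : Type) (lt : D -> D -> Prop) (V : Type)
    (sigma : nat -> V -> D) (n : nat) (c : constraint V) : Prop :=
  match c with
  | Ceq i x j y => sigma (n + i) x = sigma (n + j) y
  | Clt i x j y => lt (sigma (n + i) x) (sigma (n + j) y)
  | Cfut i x y => exists k, n + i < k /\ sigma (n + i) x = sigma k y
  end.

Section Frames.
Variables (Vl Vr : finType).
Notation V := (Vl + Vr)%type.

Definition OmegaL (l : nat) (c : constraint V) : Prop :=
  match c with
  | Ceq i (inl _) j (inl _) => i <= l /\ j <= l
  | Clt i (inl _) j (inl _) => i <= l /\ j <= l
  | _ => False
  end.

Definition OmegaR (r : nat) (c : constraint V) : Prop :=
  match c with
  | Ceq i (inr _) j (inr _) => i <= r /\ j <= r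
  | Cfut i (inr _) (inr _) => i <= r
  | _ => False
  end.

Definition is_lframe (D : Type) (lt : D -> D -> Prop) (l : nat)
    (FR : constraint V -> Prop) : Prop :=
  exists sigma_l : nat -> Vl -> D,
    forall c : constraint Vl, OmegaL l (cmap inl c) ->
      (FR (cmap inl c) <-> sat lt sigma_l 0 c).

Definition is_rframe (r : nat) (FR : constraint V -> Prop) : Prop :=
  let Req i x j y := FR (Ceq i (inr x) j (inr y)) in
  let Rf i x y := FR (Cfut i (inr x) (inr y)) in
  (forall i (x : Vr), i <= r -> Req i x i x) /\
  (forall i j (x y : Vr), Req i x j y -> Req j y i x) /\
  (forall i j k (x y z : Vr), Req i x j y -> Req j y k z -> Req i x k z) /\
  (forall i j (x y : Vr), Req i x j y ->
     (i = j -> forall z : Vr, Rf i x z <-> Rf j y z) /\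
     (i < j -> Rf i x y /\
        forall z : Vr, Rf i x z <->
          (Rf j y z \/ exists j', i < j' <= j /\ Req i x j' z))).

Definition is_lrframe (D : Type) (lt : D -> D -> Prop) (l r : nat)
    (FR : constraint V -> Prop) : Prop :=
  (forall c, FR c -> OmegaL l c \/ OmegaR r c) /\
  is_lframe lt l FR /\ is_rframe r FR.

Definition cpos (c : constraint V) : Prop :=
  match c with
  | Ceq i _ j _ | Clt i _ j _ => 0 < i /\ 0 < j
  | Cfut i _ _ => 0 < i
  end.

Definition cdec (c : constraint V) : constraint V :=
  match c with
  | Ceq i x j y => Ceq i.-1 x j.-1 y
  | Clt i x j y => Clt i.-1 x j.-1 y
  | Cfut i x y => Cfut i.-1 x y
  end.

Definition one_step_consistent (l r : nat) (FR1 FR2 : constraint V -> Prop) : Prop :=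
  forall c, (OmegaL l c \/ OmegaR r c) -> cpos c -> (FR1 c <-> FR2 (cdec c)).

Definition symbolic_model (D : Type) (lt : D -> D -> Prop) (l r : nat)
    (rho : nat -> constraint V -> Prop) : Prop :=
  (forall i, is_lrframe lt l r (rho i)) /\
  (forall i, one_step_consistent l r (rho i) (rho i.+1)).

End Frames.

(* Main.v *)
Require Import Defs.
From mathcomp Require Import all_boot.
From Stdlib Require Import Classical ClassicalEpsilon.
From Stdlib Require List.

Set Implicit Arguments.
Unset Strict Implicit.
Unset Printing Implicit Defensive.

Lemma In_mem (T : eqType) (x : T) (s : seq T) : List.In x s <-> x \in s.
Proof.
elim: s => [|y s IH] /=; first by split.
rewrite inE; split.
- by move=> [->|/IH ->]; rewrite ?eqxx ?orbT.
- by case/orP => [/eqP ->|/IH]; [left|right].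
Qed.

Section Dom.
Variables (D : Type) (lt : D -> D -> Prop).
Hypothesis Hord : strict_total_order lt.
Hypothesis Hdense : dense lt.
Hypothesis Hopen : open_dom lt.
Variable d0 : D.

Lemma irr x : ~ lt x x. Proof. by case: Hord. Qed.
Lemma trans x y z : lt x y -> lt y z -> lt x z.
Proof. by case: Hord => _ [H _]; apply: H. Qed.
Lemma tot x y : lt x y \/ x = y \/ lt y x.
Proof. by case: Hord => _ [_ H]. Qed.
Lemma asym x y : lt x y -> lt y x -> False.
Proof. move=> h1 h2; exact: (irr (trans h1 h2)). Qed.

Lemma maxl (T : Type) (f : T -> D) (C : T -> Prop) (s : list T) :
  (exists x, List.In x s /\ C x) ->
  exists m, List.In m s /\ C m /\ forall x, List.In x s -> C x -> ~ lt (f m) (f x).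
Proof.
induction s as [|y s IH]; simpl.
- by move=> [x [[] _]].
- move=> Hex. destruct (classic (exists x, List.In x s /\ C x)) as [Hs|Hs].
  + destruct (IH Hs) as [m [Hm [Cm Hmax]]].
    destruct (classic (C y /\ lt (f m) (f y))) as [[Cy Hy]|Hn].
    * exists y. split; [left; done| split; [done|]].
      move=> x [<-|Hx] Cx; first by apply irr.
      intro Hyx. apply (Hmax x Hx Cx). exact (trans Hy Hyx).
    * exists m. split;[right; done| split;[done|]].
      move=> x [<-|Hx] Cx; last exact (Hmax x Hx Cx).
      intro H; apply Hn; split; done.
  + have Cy : C y.
    { destruct Hex as [x [[<-|Hx] Cx]]; [done| exfalso; apply Hs; exists x; done]. }
    exists y; split; [left|split]; [done|done|].
    move=> x [<-|Hx] Cx; [apply irr| exfalso; apply Hs; eauto].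
Qed.

Lemma minl (T : Type) (f : T -> D) (C : T -> Prop) (s : list T) :
  (exists x, List.In x s /\ C x) ->
  exists m, List.In m s /\ C m /\ forall x, List.In x s -> C x -> ~ lt (f x) (f m).
Proof.
induction s as [|y s IH]; simpl.
- by move=> [x [[] _]].
- move=> Hex. destruct (classic (exists x, List.In x s /\ C x)) as [Hs|Hs].
  + destruct (IH Hs) as [m [Hm [Cm Hmax]]].
    destruct (classic (C y /\ lt (f y) (f m))) as [[Cy Hy]|Hn].
    * exists y. split; [left; done| split; [done|]].
      move=> x [<-|Hx] Cx; first by apply irr.
      intro Hyx. apply (Hmax x Hx Cx). exact (trans Hyx Hy).
    * exists m. split;[right; done| split;[done|]].
      move=> x [<-|Hx] Cx; last exact (Hmax x Hx Cx).
      intro H; apply Hn; split; done.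
  + have Cy : C y.
    { destruct Hex as [x [[<-|Hx] Cx]]; [done| exfalso; apply Hs; exists x; done]. }
    exists y; split; [left|split]; [done|done|].
    move=> x [<-|Hx] Cx; [apply irr| exfalso; apply Hs; eauto].
Qed.

Lemma nlt_lt b bm q : ~ lt bm b -> lt bm q -> lt b q.
Proof.
move=> H1 H2; destruct (tot b bm) as [h|[h|h]]; [exact (trans h H2)|by subst|contradiction].
Qed.
Lemma lt_nlt b bM q : ~ lt b bM -> lt q bM -> lt q b.
Proof.
move=> H1 H2; destruct (tot b bM) as [h|[h|h]]; [contradiction|by subst|exact (trans H2 h)].
Qed.

Lemma between (P : list (D * D)) p :
  (forall a b a' b', List.In (a, b) P -> List.In (a', b') P -> lt a p -> lt p a' -> lt b b') ->
  exists q, forall a b, List.In (a, b) P -> (lt a p -> lt b q) /\ (lt p a -> lt q b).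
Proof.
move=> H.
destruct (classic (exists x, List.In x P /\ lt x.1 p)) as [HL|HL];
destruct (classic (exists x, List.In x P /\ lt p x.1)) as [HU|HU].
- destruct (maxl (C:=fun x : D * D => lt x.1 p) snd HL) as [[am bm] [Im [Cm Mm]]].
  destruct (minl (C:=fun x : D * D => lt p x.1) snd HU) as [[aM bM] [IM [CM MM]]].
  simpl in *.
  have := H _ _ _ _ Im IM Cm CM. move=> /Hdense [q [H1 H2]].
  exists q => a b Hab; split => Ha.
  + exact: (nlt_lt (Mm (a, b) Hab Ha) H1).
  + exact: (lt_nlt (MM (a, b) Hab Ha) H2).
- destruct (maxl (C:=fun x : D * D => lt x.1 p) snd HL) as [[am bm] [Im [Cm Mm]]].
  simpl in *. destruct (Hopen bm) as [d [d'' [_ H2]]].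
  exists d'' => a b Hab; split => Ha.
  + exact: (nlt_lt (Mm (a, b) Hab Ha) H2).
  + exfalso; apply HU; exists (a, b); done.
- destruct (minl (C:=fun x : D * D => lt p x.1) snd HU) as [[aM bM] [IM [CM MM]]].
  simpl in *. destruct (Hopen bM) as [d [d'' [H1 _]]].
  exists d => a b Hab; split => Ha.
  + exfalso; apply HL; exists (a, b); done.
  + exact: (lt_nlt (MM (a, b) Hab Ha) H1).
- exists d0 => a b Hab; split => Ha; exfalso; [apply HL|apply HU]; exists (a, b); done.
Qed.

Definition good (P : list (D * D)) :=
  forall a b a' b', List.In (a, b) P -> List.In (a', b') P ->
    (lt a a' <-> lt b b') /\ (a = a' <-> b = b').

Lemma good_cons P p q : good P ->
  (forall a b, List.In (a, b) P ->
     (lt a p <-> lt b q) /\ (lt p a <-> lt q b) /\ (a = p <-> b = q)) ->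
  good ((p, q) :: P).
Proof.
move=> G T a b a' b' [[<- <-]|H] [[<- <-]|H'].
- split; split => h; try done; exfalso; exact: (irr h).
- have [t1 [t2 t3]] := T a' b' H'. split; first done.
  split => h; symmetry; apply t3; symmetry; done.
- have [t1 [t2 t3]] := T a b H. done.
- exact: G.
Qed.

Lemma ext1 P p : good P -> exists q, good ((p, q) :: P).
Proof.
move=> G. destruct (classic (exists b0, List.In (p, b0) P)) as [[b0 Hb0]|Hn].
- exists b0. apply good_cons=>// a b Hab.
  have [g1 g2] := G _ _ _ _ Hab Hb0. have [g3 g4] := G _ _ _ _ Hb0 Hab. done.
- have Hyp : forall a b a' b', List.In (a, b) P -> List.In (a', b') P -> lt a p -> lt p a' -> lt b b'.
  { move=> a b a' b' h1 h2 l1 l2. apply (G _ _ _ _ h1 h2). exact (trans l1 l2). }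
  destruct (between Hyp) as [q Hq]. exists q. apply good_cons=>// a b Hab.
  have Hap : a <> p. { intro E; subst; apply Hn; eexists; eauto. }
  destruct (Hq a b Hab) as [h1 h2].
  split; [split;[exact h1|] | split; [split; [exact h2|]| ]].
  + intro hbq. destruct (tot a p) as [x|[x|x]]; [done| contradiction| exfalso; exact (asym (h2 x) hbq)].
  + intro hbq. destruct (tot a p) as [x|[x|x]]; [exfalso; exact (asym (h1 x) hbq)| contradiction| done].
  + split => E; [contradiction|]. subst b.
    destruct (tot a p) as [x|[x|x]]; exfalso; [exact: (irr (h1 x)) | contradiction | exact: (irr (h2 x))].
Qed.

Lemma extn ps : forall P, good P -> exists P', good P' /\ (forall x, List.In x P -> List.In x P') /\
  (forall p, List.In p ps -> exists q, List.In (p, q) P').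
Proof.
induction ps as [|p ps IH]; move=> P G.
- exists P; split; [|split]; auto. move=> p [].
- destruct (ext1 p G) as [q Gq]. destruct (IH _ Gq) as [P' [G' [Sub Hps]]].
  exists P'. split;[done|split].
  + move=> x Hx; apply Sub; right; done.
  + move=> p0 [<-|Hp0]; last by apply Hps.
    exists q; apply Sub; left; done.
Qed.

Section Main.
Variables (Vl Vr : finType) (l r : nat) (rho : nat -> constraint (Vl + Vr) -> Prop).
Hypothesis Hsym : symbolic_model lt l r rho.

Definition realizes n (w : nat -> Vl -> D) :=
  forall c : constraint Vl, @OmegaL Vl Vr l (cmap inl c) -> (rho n (cmap inl c) <-> sat lt w 0 c).

Lemma good_sat (P : list (D * D)) (t w : nat -> Vl -> D) : good P ->
  (forall k x, k <= l -> List.In (t k x, w k x) P) ->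
  forall c : constraint Vl, @OmegaL Vl Vr l (cmap inl c) -> (sat lt t 0 c <-> sat lt w 0 c).
Proof.
move=> G H [i x j y|i x j y|i x y] /=; try done; move=> [Hi Hj]; rewrite ?add0n.
- exact: (G _ _ _ _ (H i x Hi) (H j y Hj)).2.
- exact: (G _ _ _ _ (H i x Hi) (H j y Hj)).1.
Qed.

Lemma step n w : realizes n w ->
  exists w', realizes n.+1 w' /\ forall k x, k < l -> w' k x = w k.+1 x.
Proof.
move=> Hw. destruct Hsym as [Hfr Hcons]. destruct (Hfr n.+1) as [_ [[t Ht] _]].
set P := List.flat_map (fun k => List.map (fun x => (t k x, w k.+1 x)) (enum Vl)) (iota 0 l).
have HP : forall a b, List.In (a, b) P -> exists k x, k < l /\ a = t k x /\ b = w k.+1 x.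
{ move=> a b /List.in_flat_map [k [Hk /List.in_map_iff [x [E _]]]]. exists k, x.
  case: E => <- <-. split=>//. move/In_mem: Hk. by rewrite mem_iota add0n => /andP[]. }
have GP : good P.
{ move=> a b a' b' /HP [k [x [Hk [-> ->]]]] /HP [k' [x' [Hk' [-> ->]]]].
  have Hk1 : k <= l := ltnW Hk. have Hk1' : k' <= l := ltnW Hk'.
  have E1 := Ht (Clt k x k' x') (conj Hk1 Hk1').
  have E2 := Ht (Ceq k x k' x') (conj Hk1 Hk1').
  have C1 := Hcons n (Clt k.+1 (inl x) k'.+1 (inl x')) (or_introl (conj Hk Hk')) (conj (ltn0Sn k) (ltn0Sn k')).
  have C2 := Hcons n (Ceq k.+1 (inl x) k'.+1 (inl x')) (or_introl (conj Hk Hk')) (conj (ltn0Sn k) (ltn0Sn k')).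
  have W1 := Hw (Clt k.+1 x k'.+1 x') (conj Hk Hk').
  have W2 := Hw (Ceq k.+1 x k'.+1 x') (conj Hk Hk').
  simpl in E1, E2, C1, C2, W1, W2. rewrite ?add0n in E1 E2 W1 W2.
  split; tauto. }
destruct (extn (List.map (fun y => t l y) (enum Vl)) GP) as [P' [G' [Sub Hps]]].
have Hg : forall y, exists q, List.In (t l y, q) P'.
{ move=> y; apply Hps; apply List.in_map; apply In_mem; apply mem_enum. }
pose g y := epsilon (inhabits d0) (fun q => List.In (t l y, q) P').
have Hg' : forall y, List.In (t l y, g y) P'.
{ move=> y; exact: (epsilon_spec (inhabits d0) _ (Hg y)). }
exists (fun k x => if k < l then w k.+1 x else g x). split.
- move=> c Hc. rewrite (Ht c Hc). apply (good_sat G') => // k x Hk /=.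
  case: ifP => Hkl.
  + apply Sub. apply List.in_flat_map. exists k. split.
    * apply In_mem; by rewrite mem_iota add0n Hkl.
    * apply List.in_map_iff; exists x; split; [done| apply In_mem, mem_enum].
  + have -> : k = l by apply/eqP; rewrite eqn_leq Hk leqNgt Hkl.
    apply Hg'.
- move=> k x Hk /=. by rewrite Hk.
Qed.

Definition inhW : inhabited (nat -> Vl -> D) := inhabits (fun _ _ => d0).

Fixpoint W n := match n with
  | 0 => epsilon inhW (realizes 0)
  | n'.+1 => epsilon inhW (fun w' => realizes n'.+1 w' /\ forall k x, k < l -> w' k x = W n' k.+1 x)
  end.

Lemma W_real n : realizes n (W n).
Proof.
elim: n => [|n IH] /=.
- apply: epsilon_spec. destruct Hsym as [Hfr _]. destruct (Hfr 0) as [_ [[t Ht] _]].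
  by exists t.
- exact: (epsilon_spec inhW _ (step IH)).1.
Qed.

Lemma W_shift n k x : k < l -> W n.+1 k x = W n k.+1 x.
Proof. exact: (epsilon_spec inhW _ (step (W_real n))).2. Qed.

Lemma W_idx k : forall n x, k <= l -> W (n + k) 0 x = W n k x.
Proof.
elim: k => [|k IH] n x Hk; first by rewrite addn0.
by rewrite -addSnnS (IH n.+1 x (ltnW Hk)) (W_shift _ _ Hk).
Qed.

Lemma main : exists sigma_l : nat -> Vl -> D,
    forall (i : nat) (c : constraint Vl),
      @OmegaL Vl Vr l (cmap inl c) -> (rho i (cmap inl c) <-> sat lt sigma_l i c).
Proof.
exists (fun n x => W n 0 x) => i c Hc. rewrite (@W_real i c Hc).
move: Hc; case: c => [a x b y|a x b y|a x y] //= [Ha Hb]; by rewrite ?add0n !W_idx.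
Qed.
End Main.
End Dom.

Theorem lemma2p2p3 (D : Type) (lt : D -> D -> Prop)
  (Hinf : infinite_type D) (Hord : strict_total_order lt)
  (Hdense : dense lt) (Hopen : open_dom lt)
  (Vl Vr : finType) (l r : nat)
  (rho : nat -> constraint (Vl + Vr) -> Prop) :
  symbolic_model lt l r rho ->
  exists sigma_l : nat -> Vl -> D,
    forall (i : nat) (c : constraint Vl),
      @OmegaL Vl Vr l (cmap inl c) -> (rho i (cmap inl c) <-> sat lt sigma_l i c).
Proof.
move=> Hsym. destruct (Hinf nil) as [d0 _].
exact: (main Hord Hdense Hopen d0 Hsym).
Qed.
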